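(* Under the assumptions of the following setting: (CVX), (SM), (BV) hold; $i\in[n]$ and a round $p$ of PEARL-SGD are fixed; $\gamma_k\equiv\gamma$ for $k=\tau p,\dots,\tau(p+1)-1$ with $0<\gamma\le\frac1{L_i}\min\{1,\frac1{\tau-1}\}$ (with $\frac{1}{\tau-1}=+\infty$ if $\tau=1$). Then for $j=\tau p+1,\dots,\tau(p+1)$, $$\mathbb{E}\big[\|\nabla f_i(x^i_j;x^{-i}_{\tau p})\|^2\,\big|\,\mathbf{x}_{\tau p}\big]\le\|\nabla f_i(x^i_{\tau p};x^{-i}_{\tau p})\|^2+2(j-\tau p)\gamma L_i\sigma_i^2.$$
   Context: Setup. Let $n\ge1$, $D=d_1+\dots+d_n$, joint action $\mathbf{x}=(x^1,\dots,x^n)\in\mathbb{R}^D$, $x^i\in\mathbb{R}^{d_i}$, $x^{-i}$ all blocks except the $i$-th, $f_i(x^i;x^{-i})=f_i(\mathbf{x})$. For each $i$, $f_i(\mathbf{x})=\mathbb{E}_{\xi\sim\mathcal{D}_i}[f_{i,\xi}(\mathbf{x})]$; $\nabla f_i(x^i;x^{-i})$, $\nabla f_{i,\xi}(x^i;x^{-i})$ are gradients in $x^i$ only, with $\mathbb{E}_{\xi\sim\mathcal{D}_i}[\nabla f_{i,\xi}(x^i;x^{-i})]=\nabla f_i(x^i;x^{-i})$. (CVX): each $f_i(\cdot;x^{-i})$ is convex. (SM): $\|\nabla f_i(x^i;x^{-i})-\nabla f_i(y^i;x^{-i})\|\le L_i\|x^i-y^i\|$. (BV): $\mathbb{E}_{\xi\sim\mathcal{D}_i}\|\nabla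 f_{i,\xi}(x^i;x^{-i})-\nabla f_i(x^i;x^{-i})\|^2\le\sigma_i^2$ for all $x^i,x^{-i}$. PEARL-SGD: given $\mathbf{x}_0$, $\tau\ge1$, $R\ge1$, step-sizes $\gamma_k>0$: for $p=0,\dots,R-1$, each $i$, $k=\tau p,\dots,\tau(p+1)-1$, draw $\xi^i_k\sim\mathcal{D}_i$ independently of the past and set $x^i_{k+1}=x^i_k-\gamma_k\nabla f_{i,\xi^i_k}(x^i_k;x^{-i}_{\tau p})$; $\mathbf{x}_k=(x^1_k,\dots,x^n_k)$. *)

(* Defs.v *)
From HB Require Import structures.
From mathcomp Require Import all_boot all_order all_algebra.
From mathcomp Require Import all_classical all_reals all_analysis.
Set Implicit Arguments. Unset Strict Implicit. Unset Printing Implicit Defensive.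
Import Order.TTheory GRing.Theory Num.Theory.
Import numFieldNormedType.Exports.
Local Open Scope ring_scope.

Section Defs.
Variable R : realType.

Definition dotv k (u v : 'rV[R]_k) : R := \sum_(c < k) u 0 c * v 0 c.
Definition sqnorm k (v : 'rV[R]_k) : R := \sum_(c < k) (v 0 c) ^+ 2.
Definition enorm k (v : 'rV[R]_k) : R := Num.sqrt (sqnorm v).

Definition is_grad k (h : 'rV[R]_k -> R) (x g : 'rV[R]_k) : Prop :=
  differentiable h x /\ forall v : 'rV[R]_k, 'D_v h x = dotv g v.

Definition convex_fun k (h : 'rV[R]_k -> R) : Prop :=
  forall (y z : 'rV[R]_k) (t : R), 0 <= t <= 1 ->
    h (t *: y + (1 - t) *: z) <= t * h y + (1 - t) * h z.

(* joint actions x = (x^1,...,x^n), x^j in R^{d j} *)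
Definition jact (n : nat) (d : 'I_n -> nat) := forall j : 'I_n, 'rV[R]_(d j).

(* (y ; x^{-i}) : replace the i-th block of x by y *)
Definition upd n (d : 'I_n -> nat) (x : jact d) (i : 'I_n) (y : 'rV[R]_(d i))
  : jact d :=
  fun j => match @eqP _ i j with
           | ReflectT e => castmx (erefl 1%N, congr1 d e) y
           | ReflectF _ => x j
           end.

(* Expectation of h(y_t), where y_0 = y and y_{s+1} = y_s - gam * g xi_s y_s
   with xi_0, xi_1, ... i.i.d. with law P (iterated integral over the
   independent samples, xi_0 outermost). *)
Fixpoint local_sgd_expect d0 (T : measurableType d0) (P : probability T R)
  k (g : T -> 'rV[R]_k -> 'rV[R]_k) (gam : R) (h : 'rV[R]_k -> \bar R)
  (t : nat) (y : 'rV[R]_k) {struct t} : \bar R :=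
  match t with
  | 0%N => h y
  | t'.+1 => (\int[P]_xi local_sgd_expect P g gam h t' (y - gam *: g xi y))%E
  end.

End Defs.

Arguments dotv {R k} u v.
Arguments sqnorm {R k} v.
Arguments enorm {R k} v.
Arguments is_grad {R k} h x g.
Arguments convex_fun {R k} h.
Arguments upd {R n d} x i y.
Arguments local_sgd_expect {R d0 T} P {k} g gam h t y.

(* Main.v *)
Require Import Defs.
From HB Require Import structures.
From mathcomp Require Import all_boot all_order all_algebra.
From mathcomp Require Import all_classical all_reals all_analysis.
Import Order.TTheory GRing.Theory Num.Theory.
Import numFieldNormedType.Exports.
Local Open Scope ring_scope.
From mathcomp Require Import ring lra.

Section Alg.
Context {R : realType} {k : nat}.
Implicit Types a b v w : 'rV[R]_k.

Lemma sqnorm_ge0 a : 0 <= sqnorm a.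
Proof. by apply: sumr_ge0 => c _; rewrite sqr_ge0. Qed.

Lemma dotvC a b : dotv a b = dotv b a.
Proof. by apply: eq_bigr => c _; rewrite mulrC. Qed.

Lemma dotvDl a b v : dotv (a + b) v = dotv a v + dotv b v.
Proof. rewrite /dotv -big_split; apply: eq_bigr => c _; by rewrite !mxE mulrDl. Qed.

Lemma dotvBl a b v : dotv (a - b) v = dotv a v - dotv b v.
Proof. rewrite /dotv -sumrB; apply: eq_bigr => c _; rewrite !mxE; ring. Qed.

Lemma dotvZr a v (s : R) : dotv a (s *: v) = s * dotv a v.
Proof. rewrite /dotv mulr_sumr; apply: eq_bigr => c _; rewrite !mxE; ring. Qed.

Lemma dotvNr a v : dotv a (- v) = - dotv a v.
Proof. rewrite /dotv -sumrN; apply: eq_bigr => c _; rewrite !mxE; ring. Qed.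

Lemma dotvDr a v w : dotv a (v + w) = dotv a v + dotv a w.
Proof. by rewrite dotvC dotvDl !(dotvC a). Qed.

Lemma dotvBr a v w : dotv a (v - w) = dotv a v - dotv a w.
Proof. by rewrite dotvC dotvBl !(dotvC a). Qed.

Lemma dotvZl a v (s : R) : dotv (s *: a) v = s * dotv a v.
Proof. by rewrite dotvC dotvZr dotvC. Qed.

Lemma sqnorm_dot a : sqnorm a = dotv a a.
Proof. by apply: eq_bigr => c _; rewrite expr2. Qed.

Lemma sqnormD a b : sqnorm (a + b) = sqnorm a + 2 * dotv a b + sqnorm b.
Proof. rewrite !sqnorm_dot dotvDl !dotvDr (dotvC b a); ring. Qed.

Lemma sqnormZ a (s : R) : sqnorm (s *: a) = s ^+ 2 * sqnorm a.
Proof. by rewrite !sqnorm_dot dotvZl dotvZr mulrA expr2. Qed.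

Lemma sqnorm_eq0 a : sqnorm a = 0 -> a = 0.
Proof.
move=> /eqP; rewrite psumr_eq0; last by move=> c _; rewrite sqr_ge0.
move=> /allP H; apply/rowP => c; rewrite mxE.
by have := H c (mem_index_enum c); rewrite /= sqrf_eq0 => /eqP.
Qed.

Lemma enorm_sq a e : 0 <= e -> enorm a <= e -> sqnorm a <= e ^+ 2.
Proof.
move=> e0 h; rewrite -(sqr_sqrtr (sqnorm_ge0 a)).
by rewrite ler_sqr ?nnegrE ?sqrtr_ge0.
Qed.

Lemma amgm2 (x y c : R) : 0 < c -> `|2 * (x * y)| <= x ^+ 2 / c + c * y ^+ 2.
Proof.
move=> c0; have cn : c != 0 by rewrite gt_eqF.
rewrite ler_norml; apply/andP; split.
- rewrite lerNl -subr_ge0.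
  have -> : x ^+ 2 / c + c * y ^+ 2 - - (2 * (x * y)) = (x + c * y) ^+ 2 / c by field.
  by rewrite divr_ge0 ?sqr_ge0 ?ltW.
- rewrite -subr_ge0.
  have -> : x ^+ 2 / c + c * y ^+ 2 - (2 * (x * y)) = (x - c * y) ^+ 2 / c by field.
  by rewrite divr_ge0 ?sqr_ge0 ?ltW.
Qed.

Lemma dot_amgm a v (c : R) : 0 < c ->
  `|2 * dotv a v| <= sqnorm a / c + c * sqnorm v.
Proof.
move=> c0.
have -> : sqnorm a / c + c * sqnorm v = \sum_i (a 0 i ^+ 2 / c + c * v 0 i ^+ 2).
  by rewrite /sqnorm mulr_suml mulr_sumr -big_split.
rewrite /dotv mulr_sumr; apply: le_trans (ler_norm_sum _ _ _) _.
by apply: ler_sum => i _; exact: amgm2.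
Qed.

Lemma dot_bound a v (c : R) : 0 <= c -> sqnorm a <= c ^+ 2 * sqnorm v ->
  `|dotv a v| <= c * sqnorm v.
Proof.
move=> c0 h; case: (eqVneq c 0) => [c00|cn0].
  move: h; rewrite c00 expr0n /= mul0r => h.
  have /sqnorm_eq0 -> : sqnorm a = 0 by apply/eqP; rewrite eq_le h sqnorm_ge0.
  by rewrite /dotv big1 ?normr0 ?mul0r // => i _; rewrite mxE mul0r.
have cp : 0 < c by rewrite lt_def cn0 c0.
have := @dot_amgm a v c cp; rewrite normrM ger0_norm // => h2.
have h3 : sqnorm a / c <= c * sqnorm v.
  by rewrite ler_pdivrMr // mulrAC -expr2.
have : 2 * `|dotv a v| <= 2 * (c * sqnorm v) by lra.
by rewrite ler_pM2l.
Qed.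
End Alg.
Section An.
Context {R : realType} {k : nat}.

Lemma dir_derive (phi : 'rV[R]_k -> R) (G : 'rV[R]_k -> 'rV[R]_k)
  (hg : forall y, is_grad phi y (G y)) y v (t : R) :
  is_derive t 1 (fun s : R => phi (y + s *: v)) (dotv (G (y + t *: v)) v).
Proof.
have E : (fun h : R => h^-1 *: (((fun s : R => phi (y + s *: v)) \o shift t) (h *: 1)
            - phi (y + t *: v))) =
         (fun h : R => h^-1 *: ((phi \o shift (y + t *: v)) (h *: v) - phi (y + t *: v))).
  apply: funext => h /=; congr (_ *: (phi _ - _)).
  rewrite /shift /= -[h *: (1:R)]/(h * 1) mulr1 scalerDl.
  by rewrite addrCA addrA.
split.
- rewrite /derivable E; apply: diff_derivable; exact: (hg _).1.
- rewrite /derive E; exact: (hg _).2.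
Qed.

Lemma taylor1 (psi dpsi : R -> R) (M : R) :
  (forall t : R, is_derive t (1:R) psi (dpsi t)) ->
  (forall t, 0 <= t -> dpsi t - dpsi 0 <= M * t) ->
  forall s, 0 <= s -> psi s - psi 0 - s * dpsi 0 <= M / 2 * s ^+ 2.
Proof.
move=> hd hl s s0.
pose g : R -> R := psi - (dpsi 0) \*: (@id R) - (M / 2) \*: ((@id R) * (@id R)).
pose dg := fun t : R => dpsi t - dpsi 0 - M * t.
have gd : forall t : R, is_derive t (1:R) g (dg t).
  move=> t; rewrite /g /dg.
  have H := is_deriveB (is_deriveB (hd t) (is_deriveZ (dpsi 0) (@is_derive_id _ _ t 1)))
    (is_deriveZ (M / 2) (is_deriveM (@is_derive_id _ _ t 1) (@is_derive_id _ _ t 1))).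
  apply: is_derive_eq H _.
  have sE : forall a b : R, a *: b = a * b by [].
  rewrite !sE /= !mulr1 /dg; lra.
have gc := @derivable_within_continuous _ _ g `[0, s] (fun t _ => @ex_derive _ _ _ _ _ _ _ (gd t)).
have [c c0s Hc] := MVT_segment s0 (fun t _ => gd t) gc.
have : g s - g 0 <= 0.
  rewrite Hc subr0 mulr_le0_ge0 // /dg.
  rewrite subr_le0; apply: hl.
  by move: c0s; rewrite in_itv /= => /andP[].
have gE : forall t, g t = psi t - dpsi 0 * t - M / 2 * (t * t) by [].
rewrite !gE; nra.
Qed.
End An.

Section Core.
Context {R : realType} {k : nat}.
Variables (phi : 'rV[R]_k -> R) (G : 'rV[R]_k -> 'rV[R]_k) (L : R).
Hypothesis hg : forall y, is_grad phi y (G y).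
Hypothesis hc : convex_fun phi.
Hypothesis L0 : 0 <= L.
Hypothesis hs : forall y z, enorm (G y - G z) <= L * enorm (y - z).

Lemma sq_lip y z : sqnorm (G y - G z) <= L ^+ 2 * sqnorm (y - z).
Proof.
have := enorm_sq _ _ (mulr_ge0 L0 (sqrtr_ge0 _)) (hs y z).
by rewrite exprMn sqr_sqrtr // sqnorm_ge0.
Qed.

Lemma lip_dir z h t : 0 <= t ->
  `|dotv (G (z + t *: h)) h - dotv (G (z + 0 *: h)) h| <= L * sqnorm h * t.
Proof.
move=> t0; rewrite -dotvBl scale0r addr0.
have -> : L * sqnorm h * t = (L * t) * sqnorm h by ring.
apply: dot_bound; first exact: mulr_ge0.
apply: le_trans (sq_lip _ _) _.
rewrite addrAC subrr add0r sqnormZ; apply: le_trans (lexx _) _.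
by rewrite mulrA -exprMn.
Qed.

Lemma descent z h : phi (z + h) <= phi z + dotv (G z) h + L / 2 * sqnorm h.
Proof.
have side : forall t : R, 0 <= t ->
    dotv (G (z + t *: h)) h - dotv (G (z + 0 *: h)) h <= L * sqnorm h * t.
  by move=> t t0; have := lip_dir z h t t0; rewrite ler_norml => /andP[_].
have := @taylor1 R (fun s => phi (z + s *: h)) (fun s => dotv (G (z + s *: h)) h)
  (L * sqnorm h) (fun t => @dir_derive R k phi G hg z h t) side 1 ler01.
rewrite scale1r scale0r addr0 mul1r expr1n mulr1 => H.
have : L / 2 * sqnorm h = L * sqnorm h / 2 by ring.
lra.
Qed.

Lemma lower z h s : 0 <= s ->
  phi z + s * dotv (G z) h - L * sqnorm h / 2 * s ^+ 2 <= phi (z + s *: h).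
Proof.
move=> s0.
have side : forall t : R, 0 <= t ->
    - dotv (G (z + t *: h)) h - - dotv (G (z + 0 *: h)) h <= L * sqnorm h * t.
  by move=> t t0; have := lip_dir z h t t0; rewrite ler_norml => /andP[H _]; lra.
have := @taylor1 R (fun s => - phi (z + s *: h)) (fun s => - dotv (G (z + s *: h)) h)
  (L * sqnorm h) (fun t => is_deriveN (@dir_derive R k phi G hg z h t)) side s s0.
rewrite scale0r addr0 => H; lra.
Qed.

Lemma foc x w : phi x + dotv (G x) (w - x) <= phi w.
Proof.
set dd := dotv (G x) (w - x); set M := L * sqnorm (w - x).
have M0 : 0 <= M by rewrite mulr_ge0 // sqnorm_ge0.
have key : forall s, 0 < s -> s <= 1 -> s * dd - M / 2 * s ^+ 2 <= s * (phi w - phi x).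
  move=> s s0 s1.
  have h1 := lower x (w - x) s (ltW s0).
  have h2 := hc w x s; rewrite s1 ltW //= in h2.
  have e : s *: w + (1 - s) *: x = x + s *: (w - x).
    by rewrite scalerBl scale1r scalerBr addrCA addrA.
  rewrite e in h2.
  have : M / 2 * s ^+ 2 = M / 2 * s ^+ 2 by [].
  rewrite /M /dd in h1 *; lra.
rewrite leNgt; apply/negP => H.
set de := phi x + dd - phi w.
have de0 : 0 < de by rewrite /de subr_gt0.
set s := de / (de + M).
have dM : 0 < de + M by lra.
have s0 : 0 < s by rewrite divr_gt0.
have s1 : s <= 1 by rewrite ler_pdivrMr // mul1r; lra.
have hs1 : s * (de + M) = de by rewrite /s divfK // gt_eqF.
have := key s s0 s1.
have : s * de <= s * (M / 2 * s).
  have := key s s0 s1; rewrite /de; nra.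
rewrite ler_pM2l // => H2.
nra.
Qed.

Lemma sqnormN (a : 'rV[R]_k) : sqnorm (- a) = sqnorm a.
Proof. by apply: eq_bigr => c _; rewrite mxE sqrrN. Qed.

Lemma half x z : 0 < L ->
  phi x - phi z + dotv (G x) (z - x) <= - (sqnorm (G z - G x) / L) / 2.
Proof.
move=> Lp; set D := G z - G x; set h := (- L^-1) *: D.
have d := descent z h; have f := foc x (z + h).
rewrite (addrAC z h (-x)) dotvDr in f.
have e1 : dotv (G z) h - dotv (G x) h = - L^-1 * sqnorm D.
  by rewrite -dotvBl dotvZr sqnorm_dot.
have e2 : sqnorm h = L^-1 ^+ 2 * sqnorm D by rewrite sqnormZ sqrrN.
rewrite e2 in d.
have e3 : L / 2 * (L^-1 ^+ 2 * sqnorm D) - L^-1 * sqnorm D = - (sqnorm D / L) / 2.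
  by field; rewrite gt_eqF.
have e4 : L^-1 * sqnorm D = sqnorm D / L by rewrite mulrC.
lra.
Qed.

Lemma cocoercive x z : sqnorm (G z - G x) <= L * dotv (G z - G x) (z - x).
Proof.
case: (eqVneq L 0) => [L00|Ln0].
  have := sq_lip z x; rewrite L00 expr0n /= !mul0r => //.
have Lp : 0 < L by rewrite lt_def Ln0 L0.
have h1 := half x z Lp; have h2 := half z x Lp.
rewrite -(opprB (G z)) sqnormN -(opprB z) dotvNr in h2.
have : sqnorm (G z - G x) / L <= dotv (G z - G x) (z - x).
  rewrite dotvBl; lra.
by rewrite ler_pdivrMr // mulrC.
Qed.

Lemma step y g (gam : R) : 0 < gam -> gam * L <= 1 ->
  sqnorm (G (y - gam *: g)) <= sqnorm (G y) + gam * L * sqnorm (g - G y).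
Proof.
move=> g0 g1.
set a := y - gam *: g; set D := G a - G y; set e := g - G y.
have GaE : G a = G y + D by rewrite /D addrC subrK.
have gE : g = G y + e by rewrite /e addrC subrK.
have co := cocoercive y a.
have ay : a - y = - (gam *: g) by rewrite /a addrAC subrr add0r.
rewrite -/D ay dotvNr dotvZr gE dotvDr in co.
rewrite GaE sqnormD (dotvC (G y) D).
have P0 := sqnorm_ge0 D; have E0 := sqnorm_ge0 e.
case: (eqVneq L 0) => [L00|Ln0].
  have := sq_lip a y; rewrite L00 expr0n /= mul0r -/D => HD.
  have /sqnorm_eq0 D0 : sqnorm D = 0 by apply/eqP; rewrite eq_le HD P0.
  have s0 : sqnorm (0 : 'rV[R]_k) = 0.
    by rewrite /sqnorm big1 // => c _; rewrite mxE expr0n.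
  have d0 : dotv (0 : 'rV[R]_k) (G y) = 0.
    by rewrite /dotv big1 // => c _; rewrite mxE mul0r.
  rewrite D0 s0 d0; lra.
have Lp : 0 < L by rewrite lt_def Ln0 L0.
set c := gam * L.
have cp : 0 < c by rewrite mulr_gt0.
have h2 := sqnorm_ge0 (D + c *: e).
rewrite sqnormD dotvZr sqnormZ in h2.
set P := sqnorm D in co h2 P0 *; set Q := dotv D (G y) in co *;
set S := dotv D e in co h2 *; set E := sqnorm e in h2 E0 *.
have h1 : P <= - c * (Q + S) by rewrite /c; lra.
have : c * (2 * Q + P) <= c * (c * E) by nra.
rewrite ler_pM2l // => H; lra.
Qed.
End Core.

Section Exp.
Context {R : realType} {d0 : measure_display} {T : measurableType d0}.
Local Open Scope ereal_scope.

Lemma le_int_nm (mu : {measure set T -> \bar R}) (f1 f2 : T -> \bar R) :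
  (forall x, 0 <= f1 x) -> (forall x, f1 x <= f2 x) ->
  \int[mu]_x f1 x <= \int[mu]_x f2 x.
Proof.
move=> f10 f12.
rewrite !ge0_integralTE //; last by move=> x; exact: le_trans (f10 x) (f12 x).
apply: ereal_sup_le => _ [h hf1 <-]; exists h => //= x.
exact: le_trans (hf1 x) (f12 x).
Qed.

Variables (P : probability T R) (k : nat) (g : T -> 'rV[R]_k -> 'rV[R]_k)
  (G : 'rV[R]_k -> 'rV[R]_k) (gam c sig2 : R).
Hypothesis c0 : (0 <= c)%R.
Hypothesis s0 : (0 <= sig2)%R.
Hypothesis hstep : forall y xi,
  (sqnorm (G (y - gam *: g xi y)) <= sqnorm (G y) + c * sqnorm (g xi y - G y))%R.
Hypothesis hmeas : forall y, measurable_fun setT (fun xi => sqnorm (g xi y - G y)).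
Hypothesis hvar : forall y, \int[P]_xi (sqnorm (g xi y - G y))%:E <= sig2%:E.

Lemma local_ge0 t y : 0 <= local_sgd_expect P g gam (fun y => (sqnorm (G y))%:E) t y.
Proof.
elim: t y => [|t IH] y /=; first by rewrite lee_fin sqnorm_ge0.
by apply: integral_ge0 => xi _; exact: IH.
Qed.

Lemma expect_bound t y :
  local_sgd_expect P g gam (fun y => (sqnorm (G y))%:E) t y
  <= (sqnorm (G y) + t%:R * (c * sig2))%:E.
Proof.
elim: t y => [|t IH] y /=; first by rewrite mul0r addr0.
set A := (sqnorm (G y) + t%:R * (c * sig2))%R.
apply: (@le_trans _ _ (\int[P]_xi (A%:E + c%:E * (sqnorm (g xi y - G y))%:E))).
  apply: le_int_nm => [xi|xi]; first exact: local_ge0.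
  apply: le_trans (IH _) _; rewrite -EFinM -EFinD lee_fin /A.
  have := hstep y xi; lra.
rewrite ge0_integralD; [ | by [] | | exact: measurable_cst | |
    by apply: measurable_funeM; apply/measurable_realfun.measurable_EFinP; exact: hmeas]; last 2 first.
- by move=> x _; rewrite lee_fin /A addr_ge0 ?sqnorm_ge0 // mulr_ge0 // mulr_ge0.
- by move=> x _; rewrite mule_ge0 // lee_fin ?sqnorm_ge0.
rewrite integral_cst // [X in (_ * X + _)%E](_ : _ = 1%E); last exact: probability_setT.
rewrite mule1 ge0_integralZl //; try solve [by move=> x _; rewrite lee_fin sqnorm_ge0
  | by apply/measurable_realfun.measurable_EFinP; exact: hmeas].
have I0 : 0 <= \int[P]_x (sqnorm (g x y - G y))%:E.
  by apply: integral_ge0 => x _; rewrite lee_fin sqnorm_ge0.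
have c0E : 0 <= c%:E by rewrite lee_fin.
apply: le_trans (leeD2l _ (lee_pmul c0E I0 (lexx _) (hvar y))) _.
rewrite -EFinM -EFinD lee_fin /A -addn1 natrD; lra.
Qed.
End Exp.

Section Upd.
Context {R : realType} {n : nat} {d : 'I_n -> nat}.

Lemma upd_same (x : jact R d) i y : upd x i y i = y.
Proof.
rewrite /upd; case: eqP => // e.
by rewrite (eq_irrelevance e erefl) castmx_id.
Qed.

Lemma upd_upd (x : jact R d) i y z : upd (upd x i y) i z = upd x i z.
Proof.
apply: functional_extensionality_dep => j; rewrite /upd.
by case: eqP.
Qed.

Lemma upd_id (x : jact R d) i : upd x i (x i) = x.
Proof.
apply: functional_extensionality_dep => j; rewrite /upd.
case: eqP => // e; subst j; by rewrite castmx_id.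
Qed.
End Upd.

Theorem lemma3 (R : realType) (n : nat) (d : 'I_n -> nat)
  (dxi : measure_display) (Xi : measurableType dxi)
  (Dist : 'I_n -> probability Xi R)
  (f : 'I_n -> jact R d -> R) (gradf : forall i : 'I_n, jact R d -> 'rV[R]_(d i))
  (fxi : 'I_n -> Xi -> jact R d -> R)
  (gradfxi : forall i : 'I_n, Xi -> jact R d -> 'rV[R]_(d i))
  (L sigma : 'I_n -> R)
  (* f_i = E_xi [f_{i,xi}] *)
  (Hf : forall i x, (Dist i).-integrable setT (fun xi => (fxi i xi x)%:E) /\
          (\int[Dist i]_xi (fxi i xi x)%:E = (f i x)%:E)%E)
  (* gradients in x^i *)
  (Hgradf : forall i x, is_grad (fun y => f i (upd x i y)) (x i) (gradf i x))
  (Hgradfxi : forall i xi x,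
      is_grad (fun y => fxi i xi (upd x i y)) (x i) (gradfxi i xi x))
  (* unbiasedness of the stochastic gradients (coordinatewise) *)
  (Hmeas : forall i x (c : 'I_(d i)),
      measurable_fun setT (fun xi => gradfxi i xi x 0 c))
  (Hunb : forall i x (c : 'I_(d i)),
      (Dist i).-integrable setT (fun xi => (gradfxi i xi x 0 c)%:E) /\
      (\int[Dist i]_xi (gradfxi i xi x 0 c)%:E = (gradf i x 0 c)%:E)%E)
  (* (CVX) *)
  (Hcvx : forall i x, convex_fun (fun y => f i (upd x i y)))
  (* (SM) *)
  (HL0 : forall i, 0 <= L i)
  (Hsm : forall i x (y z : 'rV[R]_(d i)),
      enorm (gradf i (upd x i y) - gradf i (upd x i z)) <= L i * enorm (y - z))
  (* (BV) *)
  (Hbv : forall i x,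
      (\int[Dist i]_xi (sqnorm (gradfxi i xi x - gradf i x))%:E
         <= (sigma i ^+ 2)%:E)%E)
  (* PEARL-SGD parameters; player i, round p fixed *)
  (tau Rr : nat) (Htau : (1 <= tau)%N) (HR : (1 <= Rr)%N)
  (i : 'I_n) (p : nat) (Hp : (p < Rr)%N)
  (gam : R) (Hgam0 : 0 < gam)
  (Hgam1 : gam * L i <= 1) (Hgam2 : gam * L i * (tau - 1)%:R <= 1)
  (* conditioning on the value x0 of x_{tau p} *)
  (x0 : jact R d)
  (j : nat) (Hj : (tau * p < j <= tau * p.+1)%N) :
  (local_sgd_expect (Dist i) (fun xi y => gradfxi i xi (upd x0 i y)) gam
     (fun y => (sqnorm (gradf i (upd x0 i y)))%:E) (j - tau * p) (x0 i)
   <= (sqnorm (gradf i x0)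
       + 2 * (j - tau * p)%:R * gam * L i * sigma i ^+ 2)%:E)%E.

Proof.
pose phi := fun y => f i (upd x0 i y).
pose G := fun y => gradf i (upd x0 i y).
pose g := fun xi y => gradfxi i xi (upd x0 i y).
have hg : forall y, is_grad phi y (G y).
  move=> y; have := Hgradf i (upd x0 i y).
  rewrite upd_same.
  have -> : (fun z => f i (upd (upd x0 i y) i z)) = phi.
    by apply: funext => z; rewrite upd_upd.
  done.
have hstep : forall y xi,
   sqnorm (G (y - gam *: g xi y)) <= sqnorm (G y) + gam * L i * sqnorm (g xi y - G y).
  move=> y xi; exact: (@step _ _ phi G (L i) hg (Hcvx i x0) (HL0 i) (Hsm i x0) y (g xi y) gam Hgam0 Hgam1).
have hmeas : forall y, measurable_fun setT (fun xi => sqnorm (g xi y - G y)).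
  move=> y; apply: measurable_sum => c.
  have -> : (fun xi => (g xi y - G y) 0 c ^+ 2) = (fun xi => (g xi y 0 c - G y 0 c) ^+ 2).
    by apply: funext => xi; rewrite !mxE.
  apply: measurable_realfun.measurable_funX; apply: measurable_realfun.measurable_funB; first exact: Hmeas.
  exact: measurable_cst.
have hvar : forall y, (\int[Dist i]_xi (sqnorm (g xi y - G y))%:E <= (sigma i ^+ 2)%:E)%E.
  move=> y; exact: Hbv.
have c0 : 0 <= gam * L i by exact: mulr_ge0 (ltW Hgam0) (HL0 i).
have H := @expect_bound R _ _ (Dist i) (d i) g G gam (gam * L i) (sigma i ^+ 2) c0 (sqr_ge0 _)
  hstep hmeas hvar (j - tau * p) (x0 i).
apply: le_trans H _.
rewrite lee_fin /G upd_id.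
have : 0 <= (j - tau * p)%:R * (gam * L i * sigma i ^+ 2) :> R.
  by rewrite mulr_ge0 // mulr_ge0 // sqr_ge0.
nra.
Qed.
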